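(* For all $k\in\mathbb N_+$ and $T\ge0$, $$v(k,T)\ \ge\ \sum_{n<k-1}F\Big(\frac{k}{n+1}\Big)\,\mathbb P(N(T)=n)+kF(1)\,\mathbb P(N(T)\ge k-1).$$
   Context: Let $\lambda>0$ and let $N$ be a Poisson process with intensity $\lambda$, arrival times $0<\sigma_1<\sigma_2<\cdots$, and natural filtration $\mathcal F_t=\sigma(N_s:s\le t)$. Let $F:[0,\infty)\to[0,\infty)$ be strictly increasing and strictly convex with $F(0)=0$. For $k\in\{0,1,\dots\}$ let $\mathcal A_k$ be the set of $(\mathcal F_t)$-adapted, integer-valued, nonnegative, non-increasing processes $\xi$ with $\xi_0=k$ whose values change only at arrival times of $N$, and $v(k,T)=\inf_{\xi\in\mathcal A_k}\mathbb E[\sum_{i:\sigma_i\le T}F(\xi_{\sigma_i-}-\xi_{\sigma_i})+F(\xi_T)]$. *)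

(* Defs.v *)
From HB Require Import structures.
From mathcomp Require Import all_boot all_order all_algebra.
From mathcomp Require Import all_classical all_reals all_analysis.
Set Implicit Arguments. Unset Strict Implicit. Unset Printing Implicit Defensive.
Import Order.TTheory GRing.Theory Num.Theory.
Import numFieldNormedType.Exports.
Local Open Scope classical_set_scope.
Local Open Scope ring_scope.

Section PoissonControl.
Context {d : measure_display} {Omega : measurableType d} {R : realType}.
Variable P : probability Omega R.

Definition mutually_independent (X : nat -> Omega -> R) : Prop :=
  forall (s : seq nat) (B : nat -> set R), uniq s ->
    (forall i, measurable (B i)) ->
    P (\bigcap_(i in [set` s]) (X i @^-1` B i)) =
    (\prod_(i <- s) P (X i @^-1` B i))%E.

(* [sig i] is the i-th arrival time sigma_i (with the convention sig 0 = 0),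
   [N t] is the counting process N(t) = #{i >= 1 | sigma_i <= t}. *)
Definition is_poisson_process (lam : R) (sig : nat -> Omega -> R)
    (N : R -> Omega -> nat) : Prop :=
  (forall w, sig 0%N w = 0) /\
  (forall i w, sig i w < sig i.+1 w) /\
  (forall w t, exists i, t < sig i w) /\
  (forall i, measurable_fun setT (fun w => sig i.+1 w - sig i w)) /\
  mutually_independent (fun i w => sig i.+1 w - sig i w) /\
  (forall i x, 0 <= x ->
     P [set w | sig i.+1 w - sig i w <= x] = (1 - expR (- (lam * x)))%:E) /\
  (forall t w, 0 <= t -> sig (N t w) w <= t /\ t < sig (N t w).+1 w).

Definition nat_filtration (N : R -> Omega -> nat) (t : R) : set (set Omega) :=
  smallest (sigma_algebra setT)
    [set A | exists s n, 0 <= s <= t /\ A = N s @^-1` [set n]].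

Definition admissible (sig : nat -> Omega -> R) (N : R -> Omega -> nat)
    (k : nat) (xi : R -> Omega -> nat) : Prop :=
  [/\ (forall w, xi 0 w = k),
      (forall t n, 0 <= t -> nat_filtration N t (xi t @^-1` [set n])),
      (forall s t w, 0 <= s -> s <= t -> (xi t w <= xi s w)%N)
    & (forall s t w, 0 <= s -> s < t -> xi s w <> xi t w ->
         exists i, (0 < i)%N /\ s < sig i w <= t)].

Definition left_lim (xi : R -> Omega -> nat) (t : R) (w : Omega) : R :=
  lim ((fun s => (xi s w)%:R : R) @ t^'-).

Definition cost (F : R -> R) (sig : nat -> Omega -> R) (xi : R -> Omega -> nat)
    (T : R) (w : Omega) : \bar R :=
  (\sum_(1 <= i <oo | (sig i w <= T)%R)
      (F (left_lim xi (sig i w) w - (xi (sig i w) w)%:R))%:E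
   + (F (xi T w)%:R)%:E)%E.

Definition value (F : R -> R) (sig : nat -> Omega -> R) (N : R -> Omega -> nat)
    (k : nat) (T : R) : \bar R :=
  ereal_inf [set (\int[P]_w cost F sig xi T w)%E | xi in admissible sig N k].

End PoissonControl.

(* Main.v *)
Require Import Defs.
From HB Require Import structures.
From mathcomp Require Import all_boot all_order all_algebra.
From mathcomp Require Import all_classical all_reals all_analysis.
From mathcomp Require Import measurable_realfun.
From mathcomp Require Import measurable_realfun.
Import Order.TTheory GRing.Theory Num.Theory.
Import numFieldNormedType.Exports.
Local Open Scope classical_set_scope.
Local Open Scope ring_scope.
Lemma sig_lt {R : realType} {Omega : Type} {sig : nat -> Omega -> R} :
  (forall i w, sig i w < sig i.+1 w) ->
  forall i j w, (i < j)%N -> sig i w < sig j w.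
Proof.
move=> hs i j w; elim: j => // j IH; rewrite ltnS leq_eqVlt => /orP[/eqP->//|/IH].
by move=> h; apply: lt_trans h (hs _ _).
Qed.

Lemma sig_le {R : realType} {Omega : Type} {sig : nat -> Omega -> R} :
  (forall i w, sig i w < sig i.+1 w) ->
  forall i j w, (i <= j)%N -> sig i w <= sig j w.
Proof.
move=> hs i j w; rewrite leq_eqVlt => /orP[/eqP->//|h].
exact/ltW/sig_lt.
Qed.

Lemma sig_lt_inv {R : realType} {Omega : Type} {sig : nat -> Omega -> R} :
  (forall i w, sig i w < sig i.+1 w) ->
  forall i j w, sig i w < sig j w -> (i < j)%N.
Proof.
move=> hs i j w h; rewrite ltnNge; apply/negP => /(sig_le hs _ _ w).
by rewrite leNgt h.
Qed.

Lemma NT_ge {R : realType} {Omega : Type} {sig : nat -> Omega -> R}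
  {N : R -> Omega -> nat} :
  (forall i w, sig i w < sig i.+1 w) ->
  (forall t w, 0 <= t -> sig (N t w) w <= t /\ t < sig (N t w).+1 w) ->
  forall t w m, 0 <= t -> ((m <= N t w)%N <-> sig m w <= t).
Proof.
move=> hs hN t w m t0; have [h1 h2] := hN t w t0; split.
  by move=> h; apply: le_trans h1; exact: sig_le.
move=> h; rewrite -ltnS; apply: (sig_lt_inv hs _ _ w); exact: le_lt_trans h h2.
Qed.

Lemma NT_eq {R : realType} {Omega : Type} {sig : nat -> Omega -> R}
  {N : R -> Omega -> nat} :
  (forall i w, sig i w < sig i.+1 w) ->
  (forall t w, 0 <= t -> sig (N t w) w <= t /\ t < sig (N t w).+1 w) ->
  forall t w n, 0 <= t -> (N t w = n <-> sig n w <= t /\ t < sig n.+1 w).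
Proof.
move=> hs hN t w n t0; split.
  by move=> <-; exact: hN.
move=> [h1 h2]; apply/eqP; rewrite eqn_leq; apply/andP; split.
  by rewrite -ltnS ltnNge; apply/negP => /(NT_ge hs hN t w n.+1 t0); rewrite leNgt h2.
exact/(NT_ge hs hN t w n t0).
Qed.

Lemma sig_meas {d : measure_display} {Omega : measurableType d} {R : realType}
  {sig : nat -> Omega -> R} :
  (forall w, sig 0%N w = 0) ->
  (forall i, measurable_fun setT (fun w => sig i.+1 w - sig i w)) ->
  forall i, measurable_fun setT (sig i).
Proof.
move=> h0 hm; elim=> [|i IH].
  by rewrite (_ : sig 0%N = cst 0); [exact: measurable_cst|apply/funext=> w; rewrite h0].
rewrite (_ : sig i.+1 = (fun w => sig i w + (sig i.+1 w - sig i w))).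
  exact: measurable_realfun.measurable_funD.
by apply/funext => w; rewrite addrC subrK.
Qed.

Lemma meas_le {d : measure_display} {Omega : measurableType d} {R : realType}
  {f : Omega -> R} (T : R) : measurable_fun setT f ->
  measurable [set w | f w <= T] /\ measurable [set w | T < f w].
Proof.
move=> mf; split.
  rewrite (_ : [set w | f w <= T] = f @^-1` `]-oo, T]%classic); last first.
    by apply/seteqP; split => w /=; rewrite in_itv.
  by have := mf measurableT _ (measurable_itv `]-oo, T]); rewrite setTI.
rewrite (_ : [set w | T < f w] = f @^-1` `]T, +oo[%classic); last first.
  by apply/seteqP; split => w /=; rewrite in_itv /= andbT.
by have := mf measurableT _ (measurable_itv `]T, +oo[); rewrite setTI.
Qed.
Section Comb.
Context {R : realType} (F : R -> R)
  (hF0 : F 0 = 0)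
  (hFpos : forall x, 0 <= x -> 0 <= F x)
  (hFinc : forall x y, 0 <= x -> x < y -> F x < F y)
  (hFconv : forall x y t, 0 <= x -> 0 <= y -> x != y -> 0 < t < 1 ->
     F (t * x + (1 - t) * y) < t * F x + (1 - t) * F y).

Lemma Fmono x y : 0 <= x -> x <= y -> F x <= F y.
Proof.
move=> x0; rewrite le_eqVlt => /orP[/eqP->//|h]; exact/ltW/hFinc.
Qed.

Lemma Fnat (a : nat) : a%:R * F 1 <= F a%:R.
Proof.
case: a => [|[|a]]; first by rewrite mul0r hF0.
  by rewrite mul1r.
set q : R := a.+2%:R.
have q0 : 0 < q by rewrite ltr0n.
have qn : q != 0 by rewrite gt_eqF.
have t01 : 0 < q^-1 < 1 by rewrite invr_gt0 q0 /= invf_lt1 // /q ltr1n.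
have := @hFconv q 0 q^-1 (ltW q0) (lexx (0:R)) qn t01.
rewrite mulr0 addr0 mulVf // hF0 mulr0 addr0 => h2.
have qi : 0 < q^-1 by rewrite invr_gt0.
rewrite -(ler_pM2l qi) mulrA mulVf // mul1r.
exact: ltW.
Qed.

Lemma comb1 (m : nat) (b : nat -> nat) :
  (\sum_(j < m) b j)%:R * F 1 <= \sum_(j < m) F (b j)%:R.
Proof.
rewrite natr_sum mulr_suml; apply: ler_sum => j _; exact: Fnat.
Qed.

Lemma comb2 (m : nat) (b : nat -> nat) : (0 < m)%N ->
  F ((\sum_(j < m) b j)%:R / m%:R) <= \sum_(j < m) F (b j)%:R.
Proof.
move=> m0; set k := (\sum_(j < m) b j)%:R.
have mR : 0 < (m%:R : R) by rewrite ltr0n.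
case/boolP: [exists j : 'I_m, k / m%:R <= (b j)%:R] => [/existsP[j hj]|].
  have h0 : 0 <= k / m%:R by rewrite divr_ge0 // /k ler0n.
  apply: le_trans (Fmono _ _ h0 hj) _.
  rewrite (bigD1 j) //= lerDl; apply: sumr_ge0 => i _; apply: hFpos; exact: ler0n.
rewrite negb_exists => /forallP hall.
have : k < k.
  have {2}-> : k = \sum_(j < m) k / m%:R.
    by rewrite sumr_const card_ord -[_ *+ m]mulr_natr divfK // gt_eqF.
  rewrite {1}/k natr_sum.
  rewrite -(big_filter _ predT) -[X in _ < X](big_filter _ predT) /=.
  apply: ltr_sum.
    by apply/hasP; exists (Ordinal m0); rewrite // mem_filter mem_index_enum.
  by move=> j _; rewrite ltNge; exact: hall.
by rewrite ltxx.
Qed.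

End Comb.

Lemma pathwise {d : measure_display} {R : realType} {Omega : measurableType d} (sig : nat -> Omega -> R)
  (N : R -> Omega -> nat) (F : R -> R) (xi : R -> Omega -> nat) (k : nat)
  (T : R) (w : Omega)
  (hs0 : forall w, sig 0%N w = 0) (hs : forall i w, sig i w < sig i.+1 w)
  (hN : forall t w, 0 <= t -> sig (N t w) w <= t /\ t < sig (N t w).+1 w)
  (hF0 : F 0 = 0)
  (hFpos : forall x, 0 <= x -> 0 <= F x)
  (hFinc : forall x y, 0 <= x -> x < y -> F x < F y)
  (hFconv : forall x y t, 0 <= x -> 0 <= y -> x != y -> 0 < t < 1 ->
     F (t * x + (1 - t) * y) < t * F x + (1 - t) * F y)
  (hx0 : forall w, xi 0 w = k)
  (hmono : forall s t w, 0 <= s -> s <= t -> (xi t w <= xi s w)%N)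
  (hjump : forall s t w, 0 <= s -> s < t -> xi s w <> xi t w ->
         exists i, (0 < i)%N /\ s < sig i w <= t)
  (hT : 0 <= T) :
  ((if (N T w < k.-1)%N then F (k%:R / (N T w).+1%:R) else k%:R * F 1)%:E
    <= cost F sig xi T w)%E.
Proof.
set n := N T w; set c := fun j => xi (sig j w) w.
have sig0 j : 0 <= sig j w by rewrite -(hs0 w); apply: sig_le.
have B1 j s : sig j w <= s -> s < sig j.+1 w -> xi s w = c j.
  move=> h1 h2; rewrite /c; move: h1; rewrite le_eqVlt => /orP[/eqP->//|h1].
  apply/esym/eqP/negPn/negP => /eqP hne.
  have [i [i0 /andP[hi1 hi2]]] := hjump _ _ _ (sig0 j) h1 hne.
  have := sig_lt_inv hs _ _ _ hi1.
  have := sig_lt_inv hs _ _ _ (le_lt_trans hi2 h2).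
  by rewrite ltnS => /leq_ltn_trans h /h; rewrite ltnn.
have B3 j : (c j.+1 <= c j)%N by apply: hmono => //; exact/ltW.
have B2 j : left_lim xi (sig j.+1 w) w = (c j)%:R.
  rewrite /left_lim; apply: lim_near_cst; first exact: Rhausdorff.
  near=> s; rewrite (B1 j) //.
  by apply/ltW; near: s; exact: nbhs_left_gt.
have c0 : c 0%N = k by rewrite /c hs0 hx0.
have cT : xi T w = c n by have [h1 h2] := hN T w hT; exact: B1.
have tele m : (\sum_(j < m) (c j - c j.+1)%N + c m = c 0%N)%N.
  elim: m => [|m IH]; first by rewrite big_ord0.
  by rewrite big_ord_recr /= -addnA subnK.
set b := fun j => if (j < n)%N then (c j - c j.+1)%N else c n.
have sumb : (\sum_(j < n.+1) b j = k)%N.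
  rewrite big_ord_recr /= /b ltnn -c0 -(tele n); congr (_ + _)%N.
  by apply: eq_bigr => j _; rewrite ltn_ord.
have sumF : \sum_(j < n.+1) F (b j)%:R
    = \sum_(j < n) F (c j - c j.+1)%:R + F (c n)%:R.
  rewrite big_ord_recr /= /b ltnn; congr (_ + _).
  by apply: eq_bigr => j _; rewrite ltn_ord.
have costge : ((\sum_(j < n.+1) F (b j)%:R)%:E <= cost F sig xi T w)%E.
  rewrite sumF /cost EFinD; apply: leeD; last by rewrite cT.
  apply: le_trans (@nneseries_lim_ge _ _ _ 1 n.+1 _); last first.
    move=> [//|i] _ _ /=; rewrite B2 -(natrB _ (B3 i)); change (0%:E <= (F (c i - c i.+1)%N%:R)%:E)%E.
    by rewrite lee_fin; apply: hFpos; exact: ler0n.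
  rewrite big_add1 /= big_mkord.
  rewrite [X in (_ <= X)%E](eq_bigl (fun _ => true)); last first.
    move=> i /=; apply/idP; apply: le_trans (hN T w hT).1; exact: sig_le.
  rewrite sumEFin lee_fin le_eqVlt; apply/orP; left; apply/eqP/eq_bigr => i _.
  by rewrite B2 natrB.
apply: le_trans costge; rewrite lee_fin.
case: ifP => _.
  by rewrite -[X in F (X%:R / _)]sumb; apply: comb2.
by rewrite -[X in X%:R * _]sumb; apply: comb1.
Unshelve. all: by end_near.
Qed.
Lemma int_mono (d : measure_display) (Omega : measurableType d) (R : realType)
  (mu : {measure set Omega -> \bar R}) (f1 f2 : Omega -> \bar R) :
  (forall x, 0 <= f1 x)%E -> (forall x, f1 x <= f2 x)%E ->
  (\int[mu]_x f1 x <= \int[mu]_x f2 x)%E.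
Proof.
move=> f10 f12.
have f20 : forall x, (0 <= f2 x)%E by move=> x; exact: le_trans (f10 x) (f12 x).
rewrite !ge0_integralE//.
apply: le_ereal_sup => _ [h hf <-]; exists h => //= x.
apply: le_trans (hf x) _.
rewrite /patch /=; case: ifP => _ //.
Qed.
Lemma int_g (d : measure_display) (Omega : measurableType d) (R : realType)
  (mu : {measure set Omega -> \bar R}) (A : nat -> set Omega) (B : set Omega)
  (c : nat -> R) (b : R) (m : nat) :
  (forall n, measurable (A n)) -> measurable B -> (forall n, 0 <= c n) -> 0 <= b ->
  (\int[mu]_w (\sum_(n < m) (c n)%:E * (\1_(A n) w)%:E + b%:E * (\1_B w)%:E)
   = \sum_(n < m) (c n)%:E * mu (A n) + b%:E * mu B)%E.
Proof.
move=> mA mB c0 b0.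
have mi : forall (S : set Omega), measurable S -> forall (e : R),
    measurable_fun setT ((fun w => e%:E * (\1_S w)%:E)%E : Omega -> \bar R).
  move=> S mS e; apply: measurable_funeM; apply/measurable_EFinP.
  exact: measurable_indic.
have i0 : forall (S : set Omega) (e : R) w, 0 <= e -> (0 <= e%:E * (\1_S w)%:E)%E.
  by move=> S e w e0; apply: mule_ge0; rewrite lee_fin // indic_ge0.
have iS : forall (S : set Omega), measurable S -> forall e, 0 <= e ->
   (\int[mu]_w (e%:E * (\1_S w)%:E) = e%:E * mu S)%E.
  move=> S mS e e0; rewrite ge0_integralZl//.
  - by rewrite integral_indic// setIT.
  - by apply/measurable_EFinP; exact: measurable_indic.
rewrite (@ge0_integralD _ _ _ mu setT measurableT
  (fun w => \sum_(n < m) (c n)%:E * (\1_(A n) w)%:E)%E (fun w => b%:E * (\1_B w)%:E)%E); last 4 first.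
- by move=> w _; apply: sume_ge0 => n _; exact: i0.
- by apply: emeasurable_sum => n; exact: mi.
- by move=> w _; exact: i0.
- exact: mi.
rewrite iS// ge0_integral_sum//.
- by congr (_ + _)%E; apply: eq_bigr => n _; rewrite iS.
- by move=> n; exact: mi.
- by move=> n w _; exact: i0.
Qed.

Lemma sum_ind {R : realType} (c : nat -> R) (n m : nat) :
  \sum_(j < m) c j * (n == j)%:R = if (n < m)%N then c n else 0.
Proof.
elim: m => [|m IH]; first by rewrite big_ord0.
rewrite big_ord_recr /= IH.
case: (ltngtP n m) => h.
- by rewrite (ltn_trans h (ltnSn m)) mulr0 addr0.
- by rewrite ltnS leqNgt h /= mulr0 addr0.
- by rewrite h ltnSn mulr1 add0r.
Qed.

Theorem lemma2p1 (d : measure_display) (Omega : measurableType d) (R : realType)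
  (P : probability Omega R) (lam : R) (sig : nat -> Omega -> R)
  (N : R -> Omega -> nat) (F : R -> R)
  (hlam : 0 < lam)
  (hN : is_poisson_process P lam sig N)
  (hF0 : F 0 = 0)
  (hFpos : forall x, 0 <= x -> 0 <= F x)
  (hFinc : forall x y, 0 <= x -> x < y -> F x < F y)
  (hFconv : forall x y t, 0 <= x -> 0 <= y -> x != y -> 0 < t < 1 ->
     F (t * x + (1 - t) * y) < t * F x + (1 - t) * F y)
  (k : nat) (hk : (0 < k)%N) (T : R) (hT : 0 <= T) :
  ((\sum_(n < k.-1) (F (k%:R / (n.+1)%:R))%:E * P [set w | N T w = n])
   + (k%:R * F 1)%:E * P [set w | (k.-1 <= N T w)%N]
   <= value P F sig N k T)%E.
Proof.
case: hN => hs0 [hs [hinf [hm [hind [hexp hNp]]]]].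
have msig := sig_meas hs0 hm.
set A := fun n => [set w | N T w = n].
set B := [set w | (k.-1 <= N T w)%N].
have mA n : measurable (A n).
  rewrite (_ : A n = [set w | sig n w <= T] `&` [set w | T < sig n.+1 w]).
    by apply: measurableI; [exact: (meas_le T (msig n)).1|exact: (meas_le T (msig n.+1)).2].
  by apply/seteqP; split => w /= h; apply/(NT_eq hs hNp T w n hT).
have mB : measurable B.
  rewrite (_ : B = [set w | sig k.-1 w <= T]); first exact: (meas_le T (msig _)).1.
  by apply/seteqP; split => w /= h; apply/(NT_ge hs hNp T w k.-1 hT).
set c := fun n : nat => F (k%:R / n.+1%:R).
set b := k%:R * F 1.
have c0 n : 0 <= c n by apply: hFpos; rewrite divr_ge0 // ler0n.
have b0 : 0 <= b by rewrite mulr_ge0 ?ler0n // hFpos.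
have E := @int_g _ _ _ P A B c b k.-1 mA mB c0 b0.
rewrite /c /b /A /B /= in E; rewrite -E.
apply: le_ereal_inf_tmp => _ [xi [hx0 _ hmono hjump] <-].
apply: int_mono.
  move=> w; apply: adde_ge0.
    apply: sume_ge0 => j _; apply: mule_ge0; rewrite lee_fin //; exact: c0.
  apply: mule_ge0; rewrite lee_fin //; exact: b0.
move=> w.
have Hp := @pathwise _ _ _ sig N F xi k T w hs0 hs hNp hF0 hFpos hFinc hFconv hx0 hmono hjump hT.
apply: le_trans Hp.
rewrite (eq_bigr (fun j : 'I_k.-1 => (c j * (N T w == j)%:R)%:E)); last first.
  move=> j _; rewrite indicE -EFinM; congr (_ * _)%:E.
  case: (eqVneq (N T w) j) => h; first by rewrite mem_set.
  by rewrite memNset //=; apply/eqP.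
rewrite sumEFin (sum_ind c (N T w) k.-1) indicE -EFinM -EFinD lee_fin.
case: ltnP => h.
  by rewrite memNset ?mulr0 ?addr0 //= leqNgt h.
by rewrite mem_set // mulr1 add0r.
Qed.
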